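(* Let $k>1$ and let $g_k:[0,+\infty)\to\mathbb{R}$ be $g_k(s)=\frac{s^2}{k+s^2}$. Then for every $\alpha>0$ there is a constant $c_\alpha>0$, independent of $\sigma$, such that for all $A,B\ge 0$, all $s\ge 0$ and all $\sigma>0$, $$A\cdot B\left[s\, g_k'\left((s-k)_+\right)\right]\le 2\sqrt2\,k\left[\alpha A^2 g_k\left((s-k)_+\right)+\alpha\sigma A^2+c_\alpha B^2\right].$$ Moreover, there exists a constant $c_k>0$, depending on $k$, such that $$s\,g_k'\left((s^2-k)_+\right)\le c_k\qquad\text{for all }s\ge 0.$$
   Context: $(\cdot)_+$ denotes the positive part; $g_k'$ is the derivative of $g_k$. *)

(* Defs.v *)
From Stdlib Require Import Reals.
From Coquelicot Require Import Coquelicot.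
Open Scope R_scope.

Definition gk (k s : R) : R := s ^ 2 / (k + s ^ 2).

Definition gk' (k s : R) : R := Derive (gk k) s.

Definition pos_part (x : R) : R := Rmax 0 x.

(* Main.v *)
Require Import Defs.
From Stdlib Require Import Reals Lra Psatz.
From Coquelicot Require Import Coquelicot.
Open Scope R_scope.

Lemma gk'_eq k x : 0 < k -> gk' k x = 2*k*x/(k+x^2)^2.
Proof.
intros hk. unfold gk'. apply is_derive_unique. unfold gk.
assert (0 < k + x^2) by nra.
auto_derive. lra. field. lra.
Qed.

Lemma t_bound k x : 1 < k -> 0 <= x ->
  (2*k*x*(x+k)/(k+x^2)^2)^2 <= 8*k^3 * (x^2/(k+x^2)).
Proof.
intros hk hx. set (D := k + x^2).
assert (HD : 1 < D) by (unfold D; nra).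
replace ((2*k*x*(x+k)/D^2)^2) with (4*k^2*x^2 * (x+k)^2 / D^4) by (field; lra).
replace (8*k^3*(x^2/D)) with (8*k^3*x^2*D^3/D^4) by (field; lra).
apply Rmult_le_compat_r. apply Rlt_le, Rinv_0_lt_compat. apply pow_lt; lra.
assert ((x+k)^2 <= 2*k*D) by (unfold D; assert (0 <= k*(x-1)^2) by (apply Rmult_le_pos; [lra|apply pow2_ge_0]); assert (0 <= (k-1)*x^2) by (apply Rmult_le_pos; [lra|apply pow2_ge_0]); nra).
assert (D <= D^3) by nra.
assert (0 <= 4*k^2*x^2) by (assert (0 <= k^2*x^2) by (rewrite <- Rpow_mult_distr; apply pow2_ge_0); lra).
assert ((x+k)^2 <= 2*k*D^3) by nra.
replace (8*k^3*x^2*D^3) with ((4*k^2*x^2)*(2*k*D^3)) by ring.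
apply Rmult_le_compat_l; lra.
Qed.

Lemma gk_le1 k x : 1 < k -> x^2/(k+x^2) <= 1.
Proof. intros. assert (0<=x^2) by apply pow2_ge_0.
apply Rmult_le_reg_r with (k+x^2). lra. field_simplify; lra. Qed.

Lemma gk_ge0 k x : 1 < k -> 0 <= x^2/(k+x^2).
Proof. intros. assert (0<=x^2) by apply pow2_ge_0.
apply Rmult_le_pos; [lra| apply Rlt_le, Rinv_0_lt_compat; lra]. Qed.

Lemma key k x s : 1 < k -> 0 <= x -> 0 <= s -> s <= x + k ->
  s * gk' k x <= 2*k*x*(x+k)/(k+x^2)^2.
Proof.
intros hk hx hs hsx. rewrite gk'_eq by lra.
assert (0 < k + x^2) by (assert (0<=x^2) by apply pow2_ge_0; lra).
replace (2*k*x*(x+k)/(k+x^2)^2) with ((x+k)*(2*k*x/(k+x^2)^2)) by (field; lra).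
apply Rmult_le_compat_r; [|lra].
apply Rmult_le_pos. nra. apply Rlt_le, Rinv_0_lt_compat, pow_lt; lra.
Qed.

Theorem mainTheorem3 (k : R) (hk : 1 < k) :
  (forall alpha : R, 0 < alpha ->
     exists c_alpha : R, 0 < c_alpha /\
       forall A B s sigma : R, 0 <= A -> 0 <= B -> 0 <= s -> 0 < sigma ->
         A * B * (s * gk' k (pos_part (s - k)))
         <= 2 * sqrt 2 * k *
            (alpha * A ^ 2 * gk k (pos_part (s - k))
             + alpha * sigma * A ^ 2 + c_alpha * B ^ 2))
  /\
  (exists c_k : R, 0 < c_k /\
     forall s : R, 0 <= s -> s * gk' k (pos_part (s ^ 2 - k)) <= c_k).
Proof.
assert (hs2 : 0 < sqrt 2) by (apply sqrt_lt_R0; lra).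
split.
- intros alpha ha.
  set (eps := sqrt 2 * alpha / (4*k^2)).
  assert (he : 0 < eps) by (unfold eps; apply Rdiv_lt_0_compat; nra).
  exists (1/(8*sqrt 2*k*eps)). split.
  { apply Rdiv_lt_0_compat; [lra|]. apply Rmult_lt_0_compat; [|lra]. nra. }
  intros A B s sigma hA hB hs hsig.
  set (x := pos_part (s - k)).
  assert (hx : 0 <= x) by (unfold x, pos_part; apply Rmax_l).
  assert (hsx : s <= x + k) by (unfold x, pos_part; pose proof (Rmax_r 0 (s-k)); lra).
  pose proof (key k x s hk hx hs hsx) as K.
  set (t := 2*k*x*(x+k)/(k+x^2)^2) in K.
  pose proof (t_bound k x hk hx) as TB. fold t in TB.
  unfold gk. set (g := x^2/(k+x^2)) in *.
  assert (hg : 0 <= g) by apply gk_ge0, hk.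
  assert (hAB : 0 <= A*B) by nra.
  assert (S1 : A*B*(s*gk' k x) <= A*B*t) by (apply Rmult_le_compat_l; lra).
  assert (S2 : A*B*t <= eps*(A*t)^2 + B^2/(4*eps)).
  { assert (0 <= (2*eps*A*t - B)^2) by apply pow2_ge_0.
    apply Rmult_le_reg_r with (4*eps). lra.
    field_simplify; [|lra]. nra. }
  assert (S3 : eps*(A*t)^2 <= eps*A^2*(8*k^3*g)).
  { rewrite Rpow_mult_distr. rewrite Rmult_assoc. apply Rmult_le_compat_l. lra.
    apply Rmult_le_compat_l. apply pow2_ge_0. lra. }
  assert (E1 : eps*A^2*(8*k^3*g) = 2*sqrt 2*k*(alpha*A^2*g)) by (unfold eps; field; lra).
  assert (E2 : B^2/(4*eps) = 2*sqrt 2*k*(1/(8*sqrt 2*k*eps)*B^2)) by (field; lra).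
  assert (S4 : 0 <= 2*sqrt 2*k*(alpha*sigma*A^2)).
  { assert (0 <= A^2) by apply pow2_ge_0. apply Rmult_le_pos. nra. apply Rmult_le_pos; [|lra]. apply Rmult_le_pos; lra. }
  nra.
- exists (1 + 8*k^3). split. { assert (0 < k^3) by (apply pow_lt; lra). lra. }
  intros s hs.
  set (x := pos_part (s^2 - k)).
  assert (hx : 0 <= x) by (unfold x, pos_part; apply Rmax_l).
  assert (hsx : s <= x + k).
  { unfold x, pos_part; pose proof (Rmax_r 0 (s^2-k)); pose proof (Rmax_l 0 (s^2-k)).
    destruct (Rle_dec 1 s). assert (s <= s^2) by (simpl; nra). lra. lra. }
  pose proof (key k x s hk hx hs hsx) as K.
  set (t := 2*k*x*(x+k)/(k+x^2)^2) in K.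
  pose proof (t_bound k x hk hx) as TB. fold t in TB.
  pose proof (gk_le1 k x hk).
  assert (t <= 1 + t^2) by (simpl; nra).
  assert (0 < k^3) by (apply pow_lt; lra).
  nra.
Qed.
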